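(* $|\sqrt\lambda\,\lambda_2|=1$, $(\sqrt\lambda\,\lambda_2)^k\neq1$ for every positive integer $k$, and the set $\{(\sqrt\lambda\,\lambda_2)^n:n\in\mathbb{N}\}$ is a dense subset of the unit circle in $\mathbb{C}$.
   Context: Standing setup: $p,q\in\mathbb{Z}$ are such that $x^3-px-q$ is irreducible over $\mathbb{Q}$ with exactly one real root $\theta$ (one has $3\theta^2-4p>0$). $K=\mathbb{Q}(\theta)\subset\mathbb{R}$, $\mathcal{O}_K$ its ring of integers. $\sigma_2:K\to\mathbb{C}$ is the embedding with $\sigma_2(\theta)=\frac{-\theta+i\sqrt{3\theta^2-4p}}{2}$, and $\lambda_2=\sigma_2(\lambda)$. $\lambda\in\mathcal{O}_K$ is a unit with $\lambda>1$, and $\sqrt\lambda>0$ is its positive square root. *)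

(* Defs.v *)
From HB Require Import structures.
From mathcomp Require Import all_boot all_order all_algebra.
From Stdlib Require Import ZArith.

Set Implicit Arguments.
Unset Strict Implicit.
Unset Printing Implicit Defensive.

Definition Z_to_int (z : Z) : int :=
  if (0 <=? z)%Z then Posz (Z.to_nat z) else (- Posz (Z.to_nat (- z)))%R.

Definition cubic_irreducible_Q (p q : Z) : Prop :=
  irreducible_poly
    (('X^3 - ((Z_to_int p)%:~R : rat)%:P * 'X - ((Z_to_int q)%:~R : rat)%:P)%R
      : {poly rat}).

From Stdlib Require Import QArith Reals Qreals.
Local Open Scope R_scope.

Definition is_alg_int (x : R) : Prop :=
  exists (n : nat) (c : nat -> Z),
    x ^ (S n) + sum_f_R0 (fun k => IZR (c k) * x ^ k) n = 0.

Definition Cpx := (R * R)%type.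
Definition Cadd (z w : Cpx) : Cpx := (fst z + fst w, snd z + snd w).
Definition Csub (z w : Cpx) : Cpx := (fst z - fst w, snd z - snd w).
Definition Cmul (z w : Cpx) : Cpx :=
  (fst z * fst w - snd z * snd w, fst z * snd w + snd z * fst w).
Definition RtoC (x : R) : Cpx := (x, 0).
Fixpoint Cpow (z : Cpx) (n : nat) : Cpx :=
  match n with O => (1, 0) | S m => Cmul z (Cpow z m) end.
Definition Cnorm (z : Cpx) : R := sqrt (fst z * fst z + snd z * snd z).

Definition theta2 (p : Z) (theta : R) : Cpx :=
  (- theta / 2, sqrt (3 * theta ^ 2 - 4 * IZR p) / 2).

Definition sigma2 (p : Z) (theta : R) (a b c : Q) : Cpx :=
  let t := theta2 p theta in
  Cadd (RtoC (Q2R a)) (Cadd (Cmul (RtoC (Q2R b)) t)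
                            (Cmul (RtoC (Q2R c)) (Cmul t t))).

(* Main.v *)
Require Import Defs.
From Stdlib Require Import ZArith QArith Reals Qreals Lra Lia Classical.
From HB Require Import structures.
From mathcomp Require all_boot all_order all_algebra ssrZ zify ring.
From Coquelicot Require Complex.

Module MC.
Import all_boot all_order all_algebra ssrZ zify ring.
Import GRing.Theory Num.Theory.
Local Open Scope ring_scope.

Lemma Z_to_intE z : Z_to_int z = int_of_Z z.
Proof.
case: z => [|pp|pp] //=; rewrite /Z_to_int /=.
rewrite NegzE; congr (- Posz _); change (PosDef.Pos.to_nat pp) with (Pos.to_nat pp); lia.
Qed.

Lemma irr_noroot (p q : Z) : cubic_irreducible_Q p q ->
  forall n d : Z, d <> Z0 -> Z.sub (Z.sub (Z.mul (Z.mul n n) n) (Z.mul (Z.mul p n) (Z.mul d d))) (Z.mul q (Z.mul (Z.mul d d) d)) <> Z0.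
Proof.
move=> Hirr n d Hd Heq.
set P := (('X^3 - ((Z_to_int p)%:~R : rat)%:P * 'X - ((Z_to_int q)%:~R : rat)%:P)%R : {poly rat}).
have dn0 : ((int_of_Z d)%:~R : rat) != 0.
  rewrite intr_eq0; apply/eqP => h; apply: Hd.
  by rewrite -(int_of_ZK d) h.
set x : rat := (int_of_Z n)%:~R / (int_of_Z d)%:~R.
have rt : root P x.
  apply/eqP.
  have : ((int_of_Z d)%:~R : rat)^+3 * P.[x] = 0.
    rewrite /P !hornerE /x !Z_to_intE.
    have -> : (0:rat) = (int_of_Z (Z.sub (Z.sub (Z.mul (Z.mul n n) n) (Z.mul (Z.mul p n) (Z.mul d d))) (Z.mul q (Z.mul (Z.mul d d) d))))%:~R by rewrite Heq.
    rewrite !rmorphB !rmorphM /=.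
    by field.
  move/eqP; rewrite mulf_eq0 expf_eq0 (negbTE dn0) andbF /= => /eqP //.
have dv : ('X - x%:P) %| P by rewrite dvdp_XsubCl.
have := Hirr.2 _ _ dv; rewrite size_XsubC => /(_ isT) /eqp_size.
rewrite size_XsubC /P.
rewrite -addrA size_addl; first by rewrite size_polyXn.
rewrite size_polyXn.
apply: (leq_ltn_trans (size_add _ _)).
rewrite gtn_max size_opp size_opp size_polyC.
apply/andP; split; last by case: (_ != 0).
by rewrite mul_polyC (leq_ltn_trans (size_scale_leq _ _)) // size_polyX.
Qed.

End MC.

Local Open Scope R_scope.


Definition isQ (x : R) : Prop := exists r : Q, x = Q2R r.
Definition isZ (x : R) : Prop := exists z : Z, x = IZR z.

Lemma isQ_plus x y : isQ x -> isQ y -> isQ (x + y).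
Proof. intros [r ->] [s ->]. exists (r + s)%Q. now rewrite Q2R_plus. Qed.
Lemma isQ_mult x y : isQ x -> isQ y -> isQ (x * y).
Proof. intros [r ->] [s ->]. exists (r * s)%Q. now rewrite Q2R_mult. Qed.
Lemma isQ_opp x : isQ x -> isQ (- x).
Proof. intros [r ->]. exists (- r)%Q. now rewrite Q2R_opp. Qed.
Lemma isQ_minus x y : isQ x -> isQ y -> isQ (x - y).
Proof. intros. unfold Rminus. apply isQ_plus; auto. now apply isQ_opp. Qed.
Lemma isQ_IZR z : isQ (IZR z).
Proof. exists (inject_Z z). unfold Q2R; simpl. field. Qed.
Lemma isQ_Q2R r : isQ (Q2R r).
Proof. now exists r. Qed.
Lemma isQ_inv x : isQ x -> x <> 0 -> isQ (/ x).
Proof. intros [r ->] H. exists (/ r)%Q. rewrite Q2R_inv; auto.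
  intro E. apply H. rewrite (Qeq_eqR _ _ E). unfold Q2R; simpl. field. Qed.
Lemma isQ_div x y : isQ x -> isQ y -> y <> 0 -> isQ (x / y).
Proof. intros. unfold Rdiv. apply isQ_mult; auto. now apply isQ_inv. Qed.

Lemma isZ_plus x y : isZ x -> isZ y -> isZ (x + y).
Proof. intros [r ->] [s ->]. exists (r + s)%Z. now rewrite plus_IZR. Qed.
Lemma isZ_mult x y : isZ x -> isZ y -> isZ (x * y).
Proof. intros [r ->] [s ->]. exists (r * s)%Z. now rewrite mult_IZR. Qed.
Lemma isZ_opp x : isZ x -> isZ (- x).
Proof. intros [r ->]. exists (- r)%Z. now rewrite opp_IZR. Qed.
Lemma isZ_minus x y : isZ x -> isZ y -> isZ (x - y).
Proof. intros. unfold Rminus. apply isZ_plus; auto. now apply isZ_opp. Qed.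
Lemma isZ_IZR z : isZ (IZR z).
Proof. now exists z. Qed.

Lemma isQ_den x : isQ x -> exists d : Z, (0 < d)%Z /\ isZ (IZR d * x).
Proof. intros [r ->]. exists (Zpos (Qden r)). split. lia.
  exists (Qnum r). unfold Q2R. field. apply IZR_nz. Qed.

Lemma isZ_pos_ge1 x : isZ x -> 0 < x -> 1 <= x.
Proof. intros [z ->] H. apply lt_0_IZR in H. apply IZR_le. lia. Qed.


Lemma noQroot p q : cubic_irreducible_Q p q ->
  forall r, isQ r -> r ^ 3 - IZR p * r - IZR q <> 0.
Proof.
  intros Hirr r [s ->] E.
  apply (MC.irr_noroot _ _ Hirr (Qnum s) (Zpos (Qden s))); [discriminate|].
  apply eq_IZR. rewrite !minus_IZR, !mult_IZR.
  unfold Q2R in E. set (n := IZR (Qnum s)) in *. set (d := IZR (Zpos (Qden s))) in *.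
  assert (Hd : d <> 0) by apply IZR_nz.
  replace 0 with (d*d*d * ((n * / d) ^ 3 - IZR p * (n * / d) - IZR q)) by (rewrite E; ring).
  field. auto.
Qed.

Section Cubic.
Variables (p q : Z) (theta : R).
Hypothesis Hnr : forall r, isQ r -> r ^ 3 - IZR p * r - IZR q <> 0.
Hypothesis Hroot : theta ^ 3 - IZR p * theta - IZR q = 0.

Lemma theta_irr : ~ isQ theta.
Proof. intro H. exact (Hnr theta H Hroot). Qed.

Lemma linind a b c : isQ a -> isQ b -> isQ c ->
  a + b * theta + c * theta ^ 2 = 0 -> a = 0 /\ b = 0 /\ c = 0.
Proof.
  intros Ha Hb Hc E.
  destruct (Req_dec c 0) as [Hc0|Hc0].
  - subst c. destruct (Req_dec b 0) as [Hb0|Hb0].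
    + subst b. split; [lra|split;auto].
    + exfalso. apply theta_irr. replace theta with (- a / b).
      2:{ unfold Rdiv. apply (Rmult_eq_reg_r b); auto. rewrite Rmult_assoc, Rinv_l; auto. lra. }
      apply isQ_div; auto. now apply isQ_opp.
  - exfalso.
    assert (K : (b*b - a*c - IZR p*c*c) * theta + (a*b - IZR q*c*c) = 0).
    { assert (H3 : theta^3 = IZR p * theta + IZR q) by lra.
      assert (Ht2 : c*theta^2 = - a - b*theta) by lra.
      replace ((b*b - a*c - IZR p*c*c) * theta + (a*b - IZR q*c*c))
        with (c*c*(theta ^ 3 - IZR p * theta - IZR q) - (c*theta - b) * (a + b*theta + c*theta^2)) by ring.
      rewrite Hroot, E. ring. }
    destruct (Req_dec (b*b - a*c - IZR p*c*c) 0) as [H1|H1].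
    + rewrite H1 in K. assert (H2 : a*b - IZR q*c*c = 0) by lra.
      apply (Hnr (b / c)). apply isQ_div; auto.
      field_simplify_eq; auto.
      replace (b ^ 3 - b * c ^ 2 * IZR p - c ^ 3 * IZR q)
        with (b * (b*b - a*c - IZR p*c*c) + c * (a*b - IZR q*c*c)) by ring.
      rewrite H1, H2; ring.
    + apply theta_irr. replace theta with (- (a*b - IZR q*c*c) / (b*b - a*c - IZR p*c*c)).
      * apply isQ_div; auto. apply isQ_opp. repeat (apply isQ_minus || apply isQ_mult || apply isQ_IZR); auto.
        repeat (apply isQ_minus || apply isQ_mult || apply isQ_IZR); auto.
      * unfold Rdiv. apply (Rmult_eq_reg_r (b*b - a*c - IZR p*c*c)); auto.
        rewrite Rmult_assoc, Rinv_l; auto. lra.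
Qed.
End Cubic.


Record tr := mkT { tA : R; tB : R; tC : R }.

Section Triples.
Variables P Q : R.

Definition tmul (X Y : tr) : tr :=
  let (A,B,C) := X in let (A',B',C') := Y in
  mkT (A*A' + Q*(B*C' + C*B')) (A*B' + B*A' + P*(B*C' + C*B') + Q*C*C')
      (A*C' + B*B' + C*A' + P*C*C').
Definition tone := mkT 1 0 0.
Fixpoint tpow (X : tr) (n : nat) : tr :=
  match n with O => tone | S m => tmul X (tpow X m) end.
Definition tadd (X Y : tr) := mkT (tA X + tA Y) (tB X + tB Y) (tC X + tC Y).
Definition tscale (r : R) (X : tr) := mkT (r * tA X) (r * tB X) (r * tC X).
Definition evR (x : R) (X : tr) := tA X + tB X * x + tC X * x ^ 2.
Definition evC (t : Cpx) (X : tr) : Cpx :=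
  Cadd (RtoC (tA X)) (Cadd (Cmul (RtoC (tB X)) t) (Cmul (RtoC (tC X)) (Cmul t t))).
Definition isQt X := isQ (tA X) /\ isQ (tB X) /\ isQ (tC X).

Lemma tr_eq A B C A' B' C' : A = A' -> B = B' -> C = C' -> mkT A B C = mkT A' B' C'.
Proof. intros; subst; reflexivity. Qed.

Lemma evR_mul x X Y : x ^ 3 = P * x + Q -> evR x (tmul X Y) = evR x X * evR x Y.
Proof.
  intro H. destruct X as [A B C], Y as [A' B' C']. unfold evR; simpl.
  assert (E : A * A' + Q * (B * C' + C * B') +
   (A * B' + B * A' + P * (B * C' + C * B') + Q * C * C') * x +
   (A * C' + B * B' + C * A' + P * C * C') * x ^ 2 -
   (A + B * x + C * x ^ 2) * (A' + B' * x + C' * x ^ 2) =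
   - ((B*C' + C*B') + C*C'*x) * (x^3 - (P*x + Q))) by ring.
  rewrite H in E. lra.
Qed.

Lemma evR_one x : evR x tone = 1.
Proof. unfold evR, tone; simpl. ring. Qed.
Lemma evR_pow x X n : x ^ 3 = P * x + Q -> evR x (tpow X n) = evR x X ^ n.
Proof. intro H. induction n; simpl. apply evR_one. rewrite evR_mul, IHn; auto. Qed.
Lemma evR_add x X Y : evR x (tadd X Y) = evR x X + evR x Y.
Proof. unfold evR, tadd; simpl; ring. Qed.
Lemma evR_scale x r X : evR x (tscale r X) = r * evR x X.
Proof. unfold evR, tscale; simpl; ring. Qed.

End Triples.
Module CX.
Import Coquelicot.Complex.
Lemma evC_mul P Q t X Y : Defs.Cmul t (Defs.Cmul t t) = Defs.Cadd (Defs.Cmul (Defs.RtoC P) t) (Defs.RtoC Q) ->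
  evC t (tmul P Q X Y) = Defs.Cmul (evC t X) (evC t Y).
Proof.
  intro H. destruct X as [A B C], Y as [A' B' C']. unfold evC; simpl.
  change Defs.Cmul with Cmult in *. change Defs.Cadd with Cplus in *.
  change Defs.RtoC with RtoC in *.
  repeat rewrite ?RtoC_plus, ?RtoC_mult.
  set (u := Cmult t (Cmult t t)) in H.
  assert (E : forall a b : Complex.C, (a - b = 0)%C -> a = b).
  { intros a b Hab. replace a with (a - b + b)%C by ring. rewrite Hab. ring. }
  apply E.
  transitivity (Cmult (- ((B*C' + C*B') + C*C'*t))%C (u - (P * t + Q)))%C.
  - unfold u. ring.
  - rewrite H. ring.
Qed.
End CX.
Section Triples2.
Variables P Q : R.
Local Notation tmul := (tmul P Q).
Local Notation tpow := (tpow P Q).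

Lemma evC_one t : evC t tone = (1, 0).
Proof. unfold evC, tone, Cadd, Cmul, RtoC; simpl. f_equal; ring. Qed.

Lemma evC_pow t X n : Cmul t (Cmul t t) = Cadd (Cmul (RtoC P) t) (RtoC Q) ->
  evC t (tpow X n) = Cpow (evC t X) n.
Proof. intro H. induction n; simpl. apply evC_one. rewrite (CX.evC_mul P Q), IHn; auto. Qed.

Lemma isQt_mul X Y : isQ P -> isQ Q -> isQt X -> isQt Y -> isQt (tmul X Y).
Proof.
  intros HP HQ [HA [HB HC]] [HA' [HB' HC']]. destruct X as [A B C], Y as [A' B' C'].
  simpl in *. unfold isQt; simpl.
  repeat split; repeat (apply isQ_plus || apply isQ_mult); auto.
Qed.
Lemma isQt_one : isQt tone.
Proof. unfold isQt, tone; simpl. repeat split; apply isQ_IZR. Qed.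
Lemma isQt_pow X n : isQ P -> isQ Q -> isQt X -> isQt (tpow X n).
Proof. intros. induction n; simpl. apply isQt_one. now apply isQt_mul. Qed.
Lemma isQt_add X Y : isQt X -> isQt Y -> isQt (tadd X Y).
Proof. intros [? [? ?]] [? [? ?]]. unfold isQt, tadd; simpl. repeat split; apply isQ_plus; auto. Qed.
Lemma isQt_scale r X : isQ r -> isQt X -> isQt (tscale r X).
Proof. intros ? [? [? ?]]. unfold isQt, tscale; simpl. repeat split; apply isQ_mult; auto. Qed.

Lemma tmul_add X Y Z : tmul X (tadd Y Z) = tadd (tmul X Y) (tmul X Z).
Proof. destruct X, Y, Z. unfold tmul, tadd; simpl. apply tr_eq; ring. Qed.
Lemma tmul_scale X r Y : tmul X (tscale r Y) = tscale r (tmul X Y).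
Proof. destruct X, Y. unfold tmul, tscale; simpl. apply tr_eq; ring. Qed.
Lemma tmul_comm X Y : tmul X Y = tmul Y X.
Proof. destruct X, Y. unfold tmul; simpl. apply tr_eq; ring. Qed.
Lemma tmul_assoc X Y Z : tmul X (tmul Y Z) = tmul (tmul X Y) Z.
Proof. destruct X, Y, Z. unfold tmul; simpl. apply tr_eq; ring. Qed.
Lemma tmul_one X : tmul tone X = X.
Proof. destruct X. unfold tmul, tone; simpl. apply tr_eq; ring. Qed.

End Triples2.


Definition n2 (z : Cpx) := fst z * fst z + snd z * snd z.

Definition Fn (P Q : R) (X : tr) : R :=
  let (A,B,C) := X in
  A*((A+C*P)^2 - B*(B*P+C*Q)) - B*(C*Q*(A+C*P) - B*B*Q) + C*(C*Q*(B*P+C*Q) - (A+C*P)*B*Q).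

Lemma n2_mul z w : n2 (Cmul z w) = n2 z * n2 w.
Proof. destruct z, w. unfold n2, Cmul; simpl. ring. Qed.

Section Norm.
Variables (p q : Z) (theta : R).
Let P := IZR p.
Let Q := IZR q.
Hypothesis Hroot : theta ^ 3 - P * theta - Q = 0.
Hypothesis Hpos : 0 < 3 * theta ^ 2 - 4 * P.
Let s := sqrt (3 * theta ^ 2 - 4 * P).
Let t2 := theta2 p theta.

Lemma s_sq : s * s = 3 * theta ^ 2 - 4 * P.
Proof. unfold s. apply sqrt_sqrt. lra. Qed.
Lemma s_pos : 0 < s.
Proof. unfold s. apply sqrt_lt_R0. lra. Qed.

Lemma Hroot' : theta ^ 3 = P * theta + Q.
Proof. lra. Qed.

Lemma t2_root : Cmul t2 (Cmul t2 t2) = Cadd (Cmul (RtoC P) t2) (RtoC Q).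
Proof.
  unfold t2, theta2. fold P. fold s. unfold Cmul, Cadd, RtoC. cbn [fst snd].
  pose proof s_sq as H.
  f_equal; apply Rminus_diag_uniq.
  - transitivity ((theta ^ 3 - P * theta - Q) + 3 * theta / 8 * (s * s - (3 * theta ^ 2 - 4 * P))).
    + field.
    + rewrite Hroot, H. ring.
  - transitivity (- s / 8 * (s * s - (3 * theta ^ 2 - 4 * P))).
    + field.
    + rewrite H. ring.
Qed.

Definition Nm (X : tr) := evR theta X * n2 (evC t2 X).

Lemma Nm_mul X Y : Nm (tmul P Q X Y) = Nm X * Nm Y.
Proof.
  unfold Nm. rewrite evR_mul, CX.evC_mul, n2_mul. ring.
  apply t2_root. apply Hroot'.
Qed.

Lemma Nm_one : Nm (tone) = 1.
Proof. unfold Nm. rewrite evR_one, evC_one. unfold n2; simpl; ring. Qed.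

Lemma Nm_pow X m : Nm (tpow P Q X m) = Nm X ^ m.
Proof. induction m; simpl. apply Nm_one. rewrite Nm_mul, IHm. ring. Qed.

Lemma Nm_F X : Nm X = Fn P Q X.
Proof.
  destruct X as [A B C]. unfold Nm, evR, evC, n2, t2, theta2. fold P. fold s.
  unfold Cmul, Cadd, RtoC, Fn. cbn [fst snd tA tB tC].
  pose proof s_sq as H.
  apply Rminus_diag_uniq.
  transitivity ((C^3*theta^3 - C^3*P*theta - 3*A*B*C + B^3 - B*C^2*P + C^3*Q) * (theta^3 - P*theta - Q)
     + (A + B*theta + C*theta^2) * (s*s - (3*theta^2 - 4*P)) *
       (- (2*A - B*theta + C*(2*P - theta^2)) * C / 4 + C^2 * (s*s - (3*theta^2 - 4*P)) / 16 + (B - C*theta)^2 / 4)).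
  - field.
  - rewrite Hroot, H. ring.
Qed.

Lemma Fn_scale d X : Fn P Q (tscale d X) = d^3 * Fn P Q X.
Proof. destruct X. unfold Fn, tscale; simpl. ring. Qed.

Lemma Fn_isZ X : isZ (tA X) -> isZ (tB X) -> isZ (tC X) -> isZ (Fn P Q X).
Proof.
  destruct X as [A B C]; simpl. intros HA HB HC. unfold Fn.
  assert (HP : isZ P) by apply isZ_IZR. assert (HQ : isZ Q) by apply isZ_IZR.
  repeat (apply isZ_plus || apply isZ_minus || apply isZ_opp || apply isZ_mult || apply isZ_IZR); auto.
  all: unfold pow; repeat (apply isZ_plus || apply isZ_minus || apply isZ_opp || apply isZ_mult || apply isZ_IZR); auto.
Qed.

End Norm.


Lemma sum_opp' f m : sum_f_R0 (fun k => - f k) m = - sum_f_R0 f m.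
Proof. induction m; simpl. ring. rewrite IHm. ring. Qed.

Section Integral.
Variables (p q : Z) (theta : R).
Let P := IZR p.
Let Q := IZR q.
Hypothesis Hnr : forall r, isQ r -> r ^ 3 - IZR p * r - IZR q <> 0.
Hypothesis Hroot : theta ^ 3 - P * theta - Q = 0.
Hypothesis Hpos : 0 < 3 * theta ^ 2 - 4 * P.

Lemma teq X Y : isQt X -> isQt Y -> evR theta X = evR theta Y -> X = Y.
Proof.
  destruct X as [A B C], Y as [A' B' C']. unfold isQt, evR; simpl.
  intros [HA [HB HC]] [HA' [HB' HC']] E.
  destruct (linind p q theta Hnr Hroot (A - A') (B - B') (C - C')) as [E1 [E2 E3]];
    try (apply isQ_minus; auto).
  - lra.
  - apply tr_eq; lra.
Qed.

Lemma HQP : isQ P. Proof. apply isQ_IZR. Qed.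
Lemma HQQ : isQ Q. Proof. apply isQ_IZR. Qed.

Fixpoint tsum (f : nat -> tr) (m : nat) : tr :=
  match m with O => f O | S k => tadd (tsum f k) (f (S k)) end.

Lemma evR_tsum f m : evR theta (tsum f m) = sum_f_R0 (fun k => evR theta (f k)) m.
Proof. induction m; simpl; auto. rewrite evR_add, IHm. reflexivity. Qed.

Lemma isQt_tsum f m : (forall k, (k <= m)%nat -> isQt (f k)) -> isQt (tsum f m).
Proof. induction m; intros H; simpl. apply H; lia. apply isQt_add. apply IHm; intros; apply H; lia. apply H; lia. Qed.

Variable S : tr.
Hypothesis HS : isQt S.
Variable n : nat.
Variable c : nat -> Z.
Hypothesis Hx : evR theta S ^ (Datatypes.S n) + sum_f_R0 (fun k => IZR (c k) * evR theta S ^ k) n = 0.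

Inductive inM : tr -> Prop :=
| inM_gen k : (k <= n)%nat -> inM (tpow P Q S k)
| inM_add X Y : inM X -> inM Y -> inM (tadd X Y)
| inM_scale z X : inM X -> inM (tscale (IZR z) X).

Lemma inM_tsum f m : (forall k, (k <= m)%nat -> inM (f k)) -> inM (tsum f m).
Proof. induction m; intros H; simpl. apply H; lia. apply inM_add. apply IHm; intros; apply H; lia. apply H; lia. Qed.

Lemma top_pow : tpow P Q S (Datatypes.S n) = tsum (fun k => tscale (IZR (- c k)) (tpow P Q S k)) n.
Proof.
  apply teq.
  - apply isQt_pow; auto using HQP, HQQ.
  - apply isQt_tsum. intros. apply isQt_scale. apply isQ_IZR. apply isQt_pow; auto using HQP, HQQ.
  - rewrite evR_tsum, evR_pow by (unfold P, Q in *; lra).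
    assert (E : sum_f_R0 (fun k => evR theta (tscale (IZR (- c k)) (tpow P Q S k))) n
              = - sum_f_R0 (fun k => IZR (c k) * evR theta S ^ k) n).
    { rewrite <- sum_opp'. apply sum_eq. intros i _. rewrite evR_scale, evR_pow, opp_IZR by (unfold P, Q in *; lra). ring. }
    rewrite E. lra.
Qed.

Lemma inM_mul X : inM X -> inM (tmul P Q S X).
Proof.
  induction 1.
  - destruct (Nat.eq_dec k n) as [->|Hk].
    + change (tmul P Q S (tpow P Q S n)) with (tpow P Q S (Datatypes.S n)).
      rewrite top_pow. apply inM_tsum. intros. apply inM_scale. now apply inM_gen.
    + change (tmul P Q S (tpow P Q S k)) with (tpow P Q S (Datatypes.S k)). apply inM_gen. lia.
  - rewrite tmul_add. now apply inM_add.
  - rewrite tmul_scale. now apply inM_scale.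
Qed.

Lemma inM_pow m : inM (tpow P Q S m).
Proof. induction m. apply (inM_gen 0). lia. simpl. now apply inM_mul. Qed.

Definition lat (d : R) (X : tr) := isZ (d * tA X) /\ isZ (d * tB X) /\ isZ (d * tC X).

Lemma lat_mul d e X : isZ e -> lat d X -> lat (d * e) X.
Proof.
  intros He [H1 [H2 H3]]. unfold lat.
  replace (d * e * tA X) with (e * (d * tA X)) by ring.
  replace (d * e * tB X) with (e * (d * tB X)) by ring.
  replace (d * e * tC X) with (e * (d * tC X)) by ring.
  repeat split; apply isZ_mult; auto.
Qed.

Lemma isQt_den X : isQt X -> exists d : Z, (0 < d)%Z /\ lat (IZR d) X.
Proof.
  intros [H1 [H2 H3]].
  destruct (isQ_den _ H1) as [d1 [Hd1 K1]].
  destruct (isQ_den _ H2) as [d2 [Hd2 K2]].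
  destruct (isQ_den _ H3) as [d3 [Hd3 K3]].
  exists (d1 * d2 * d3)%Z. split. apply Z.mul_pos_pos; [apply Z.mul_pos_pos|]; auto.
  unfold lat. rewrite !mult_IZR.
  replace (IZR d1 * IZR d2 * IZR d3 * tA X) with ((IZR d1 * tA X) * (IZR d2 * IZR d3)) by ring.
  replace (IZR d1 * IZR d2 * IZR d3 * tB X) with ((IZR d2 * tB X) * (IZR d1 * IZR d3)) by ring.
  replace (IZR d1 * IZR d2 * IZR d3 * tC X) with ((IZR d3 * tC X) * (IZR d1 * IZR d2)) by ring.
  repeat split; apply isZ_mult; auto; apply isZ_mult; apply isZ_IZR.
Qed.

Lemma exists_D_gen m : exists D : Z, (0 < D)%Z /\ forall k, (k <= m)%nat -> lat (IZR D) (tpow P Q S k).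
Proof.
  induction m as [|m [D [HD IH]]].
  - destruct (isQt_den (tpow P Q S 0)) as [d [Hd Hl]]. apply isQt_one.
    exists d. split; auto. intros k Hk. replace k with 0%nat by lia. auto.
  - destruct (isQt_den (tpow P Q S (Datatypes.S m))) as [d [Hd Hl]].
    apply isQt_pow; auto using HQP, HQQ.
    exists (D * d)%Z. split. lia. intros k Hk. rewrite mult_IZR.
    destruct (Nat.eq_dec k (Datatypes.S m)) as [->|Hne].
    + rewrite Rmult_comm. apply lat_mul; auto. apply isZ_IZR.
    + apply lat_mul. apply isZ_IZR. apply IH. lia.
Qed.

Lemma lat_add d X Y : lat d X -> lat d Y -> lat d (tadd X Y).
Proof.
  intros [? [? ?]] [? [? ?]]. unfold lat, tadd; simpl.
  rewrite !Rmult_plus_distr_l. repeat split; apply isZ_plus; auto.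
Qed.
Lemma lat_scale d z X : lat d X -> lat d (tscale (IZR z) X).
Proof.
  intros [H1 [H2 H3]]. unfold lat, tscale; simpl.
  replace (d * (IZR z * tA X)) with (IZR z * (d * tA X)) by ring.
  replace (d * (IZR z * tB X)) with (IZR z * (d * tB X)) by ring.
  replace (d * (IZR z * tC X)) with (IZR z * (d * tC X)) by ring.
  repeat split; apply isZ_mult; auto; apply isZ_IZR.
Qed.

Lemma Nm_ge1 : 0 < Nm p theta S -> 1 <= Nm p theta S.
Proof.
  intro Hp.
  destruct (exists_D_gen n) as [D [HD HL]].
  assert (HDr : 0 < IZR D) by (apply IZR_lt; lia).
  assert (Hint : forall m, isZ (IZR D ^ 3 * Nm p theta S ^ m)).
  { intro m. rewrite <- (Nm_pow p q), (Nm_F p q), <- Fn_scale; auto.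
    assert (L : lat (IZR D) (tpow P Q S m)).
    { pose proof (inM_pow m) as HM. induction HM.
      - apply HL; auto.
      - apply lat_add; auto.
      - apply lat_scale; auto. }
    destruct L as [L1 [L2 L3]]. apply Fn_isZ; unfold tscale; simpl; auto. }
  destruct (Rlt_or_le (Nm p theta S) 1) as [Hlt|]; auto.
  exfalso.
  destruct (pow_lt_1_zero (Nm p theta S)) with (y := / IZR D ^ 3) as [N HN].
  - rewrite Rabs_pos_eq; lra.
  - apply Rinv_0_lt_compat. apply pow_lt; auto.
  - specialize (HN N (le_n _)). rewrite Rabs_pos_eq in HN by (apply pow_le; lra).
    assert (H1 := isZ_pos_ge1 _ (Hint N)).
    assert (H2 : 0 < IZR D ^ 3 * Nm p theta S ^ N).
    { apply Rmult_lt_0_compat; apply pow_lt; auto. }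
    specialize (H1 H2).
    assert (H3 : IZR D ^ 3 * Nm p theta S ^ N < IZR D ^ 3 * / IZR D ^ 3).
    { apply Rmult_lt_compat_l; auto. apply pow_lt; auto. }
    rewrite Rinv_r in H3. lra. apply pow_nonzero. lra.
Qed.

End Integral.


Lemma Hpos_lem (p q : Z) theta :
  (forall r, isQ r -> r ^ 3 - IZR p * r - IZR q <> 0) ->
  theta ^ 3 - IZR p * theta - IZR q = 0 ->
  (forall x : R, x ^ 3 - IZR p * x - IZR q = 0 -> x = theta) ->
  0 < 3 * theta ^ 2 - 4 * IZR p.
Proof.
  intros Hnr Hroot Huniq.
  destruct (Rlt_or_le 0 (3 * theta ^ 2 - 4 * IZR p)) as [H|H]; auto.
  exfalso.
  set (d := 4 * IZR p - 3 * theta ^ 2).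
  assert (Hd : 0 <= d) by (unfold d; lra).
  set (r := sqrt d).
  assert (Hr : r * r = d) by (apply sqrt_sqrt; auto).
  assert (R1 : forall x, x * x + theta * x + theta ^ 2 - IZR p = 0 -> x ^ 3 - IZR p * x - IZR q = 0).
  { intros x Hx.
    replace (x ^ 3 - IZR p * x - IZR q) with
      ((x - theta) * (x * x + theta * x + theta ^ 2 - IZR p) + (theta ^ 3 - IZR p * theta - IZR q)) by ring.
    rewrite Hx, Hroot. ring. }
  assert (Q1 : ((- theta + r) / 2) * ((- theta + r) / 2) + theta * ((- theta + r) / 2) + theta ^ 2 - IZR p = 0).
  { apply Rminus_diag_uniq; transitivity ((r*r - d)/4); [unfold d; field | rewrite Hr; field]. }
  assert (Q2 : ((- theta - r) / 2) * ((- theta - r) / 2) + theta * ((- theta - r) / 2) + theta ^ 2 - IZR p = 0).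
  { apply Rminus_diag_uniq; transitivity ((r*r - d)/4); [unfold d; field | rewrite Hr; field]. }
  assert (E1 := Huniq _ (R1 _ Q1)).
  assert (E2 := Huniq _ (R1 _ Q2)).
  assert (Ht : theta = 0) by lra.
  apply (theta_irr p q theta Hnr Hroot). rewrite Ht. apply (isQ_IZR 0).
Qed.

Lemma pow_split (x : R) i n : (i <= n)%nat -> x ^ (S n) = x ^ i * x ^ (n - i) * x.
Proof.
  intro H. rewrite <- pow_add. replace (i + (n - i))%nat with n by lia. simpl. ring.
Qed.

Section Main.
Variables (p q : Z) (theta : R).
Let P := IZR p.
Let Q := IZR q.
Hypothesis Hnr : forall r, isQ r -> r ^ 3 - IZR p * r - IZR q <> 0.
Hypothesis Hroot : theta ^ 3 - P * theta - Q = 0.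
Hypothesis Hpos : 0 < 3 * theta ^ 2 - 4 * P.
Variable T : tr.
Hypothesis HT : isQt T.
Let lam := evR theta T.
Hypothesis Hlam : 0 < lam.
Hypothesis Hint : is_alg_int lam.
Hypothesis Hunit : is_alg_int (/ lam).

Lemma Hroot6 : theta ^ 3 = P * theta + Q.
Proof. lra. Qed.

Lemma inv_triple : exists T', isQt T' /\ evR theta T' = / lam.
Proof.
  destruct Hunit as [n [c Hc]].
  exists (tsum (fun k => tscale (IZR (- c k)) (tpow P Q T (n - k))) n).
  split.
  - apply isQt_tsum. intros. apply isQt_scale. apply isQ_IZR. apply isQt_pow; auto; apply isQ_IZR.
  - rewrite evR_tsum.
    assert (Hl0 : lam <> 0) by lra.
    apply (Rmult_eq_reg_l lam); auto. rewrite Rinv_r; auto.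
    assert (E : lam ^ (S n) * ((/ lam) ^ S n + sum_f_R0 (fun k => IZR (c k) * (/ lam) ^ k) n) = 0)
      by (rewrite Hc; ring).
    rewrite Rmult_plus_distr_l, <- Rpow_mult_distr, Rinv_r, pow1, scal_sum in E; auto.
    assert (E2 : sum_f_R0 (fun i => IZR (c i) * (/ lam) ^ i * lam ^ S n) n
               = - (lam * sum_f_R0 (fun k => evR theta (tscale (IZR (- c k)) (tpow P Q T (n - k)))) n)).
    { rewrite scal_sum. rewrite <- sum_opp'. apply sum_eq. intros i Hi.
      rewrite evR_scale, evR_pow by apply Hroot6. fold lam. rewrite opp_IZR.
      rewrite (pow_split lam i n Hi).
      replace (IZR (c i) * (/ lam) ^ i * (lam ^ i * lam ^ (n - i) * lam))
        with (IZR (c i) * ((/ lam) ^ i * lam ^ i) * lam ^ (n - i) * lam) by ring.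
      rewrite <- Rpow_mult_distr, Rinv_l, pow1; auto. ring. }
    rewrite E2 in E. lra.
Qed.
End Main.


Module CX2.
Import Coquelicot.Complex.
Lemma Cpow_eq z n : Defs.Cpow z n = Cpow z n.
Proof. induction n; simpl. reflexivity. rewrite IHn. reflexivity. Qed.
Lemma Cpow_mul z w n : Defs.Cpow (Defs.Cmul z w) n = Defs.Cmul (Defs.Cpow z n) (Defs.Cpow w n).
Proof.
  induction n; simpl.
  - unfold Defs.Cmul; simpl. f_equal; ring.
  - rewrite IHn. change Defs.Cmul with Cmult; match goal with |- ?a = ?b => change (@eq Complex.C a b) end; ring.
Qed.
Lemma Cpow_add z m n : Defs.Cpow z (m + n) = Defs.Cmul (Defs.Cpow z m) (Defs.Cpow z n).
Proof.
  induction m; simpl.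
  - unfold Defs.Cmul; simpl. destruct (Defs.Cpow z n); simpl; f_equal; ring.
  - rewrite IHm. change Defs.Cmul with Cmult; match goal with |- ?a = ?b => change (@eq Complex.C a b) end; ring.
Qed.
End CX2.

Lemma Cpow_RtoC r n : Cpow (RtoC r) n = RtoC (r ^ n).
Proof. induction n; simpl. reflexivity. rewrite IHn. unfold Cmul, RtoC; simpl. f_equal; ring. Qed.

Lemma n2_pow z n : n2 (Cpow z n) = n2 z ^ n.
Proof. induction n; simpl. unfold n2; simpl; ring. rewrite n2_mul, IHn. reflexivity. Qed.

Lemma n2_nonneg z : 0 <= n2 z.
Proof. unfold n2. nra. Qed.

Section Main2.
Variables (p q : Z) (theta : R).
Let P := IZR p.
Let Q := IZR q.
Hypothesis Hnr : forall r, isQ r -> r ^ 3 - IZR p * r - IZR q <> 0.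
Hypothesis Hroot : theta ^ 3 - P * theta - Q = 0.
Hypothesis Hpos : 0 < 3 * theta ^ 2 - 4 * P.
Variable T : tr.
Hypothesis HT : isQt T.
Let lam := evR theta T.
Hypothesis Hlam : 1 < lam.
Hypothesis Hint : is_alg_int lam.
Hypothesis Hunit : is_alg_int (/ lam).
Let t2 := theta2 p theta.

Lemma norm_one : lam * n2 (evC t2 T) = 1.
Proof.
  destruct (inv_triple p q theta Hroot T HT ltac:(fold lam; lra) Hunit) as [T' [HT' HevT']].
  assert (Hprod : tmul P Q T T' = tone).
  { apply (teq p q theta Hnr Hroot).
    - apply isQt_mul; auto; apply isQ_IZR.
    - apply isQt_one.
    - rewrite evR_mul, evR_one, HevT'. fold lam. field. lra. unfold P, Q in *; lra. }
  assert (HN : Nm p theta T * Nm p theta T' = 1).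
  { rewrite <- (Nm_mul p q theta Hroot Hpos). fold P Q. rewrite Hprod. apply Nm_one. }
  assert (H1 : 0 <= Nm p theta T) by (unfold Nm; apply Rmult_le_pos; [fold lam; lra | apply n2_nonneg]).
  assert (H2 : 0 <= Nm p theta T') by (unfold Nm; apply Rmult_le_pos; [rewrite HevT'; fold lam; left; apply Rinv_0_lt_compat; lra | apply n2_nonneg]).
  assert (P1 : 0 < Nm p theta T) by (destruct H1 as [|H1]; auto; rewrite <- H1 in HN; lra).
  assert (P2 : 0 < Nm p theta T') by (destruct H2 as [|H2]; auto; rewrite <- H2 in HN; lra).
  destruct Hint as [n [c Hc]].
  assert (G1 := Nm_ge1 p q theta Hnr Hroot Hpos T HT n c Hc P1).
  destruct Hunit as [n' [c' Hc']].
  replace (/ lam) with (evR theta T') in Hc' by (rewrite HevT'; reflexivity).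
  assert (G2 := Nm_ge1 p q theta Hnr Hroot Hpos T' HT' n' c' Hc' P2).
  assert (E : Nm p theta T = 1) by nra.
  exact E.
Qed.

Lemma not_root k : (0 < k)%nat -> Cpow (Cmul (RtoC (sqrt lam)) (evC t2 T)) k <> (1, 0).
Proof.
  intros Hk E.
  assert (E2 : Cpow (Cmul (RtoC (sqrt lam)) (evC t2 T)) (k + k) = (1, 0)).
  { rewrite CX2.Cpow_add, E. unfold Cmul; simpl. f_equal; ring. }
  rewrite CX2.Cpow_mul, Cpow_RtoC in E2.
  rewrite <- (evC_pow P Q) in E2 by (apply t2_root; auto).
  assert (Hsq : sqrt lam ^ (k + k) = lam ^ k).
  { rewrite pow_add, <- Rpow_mult_distr, sqrt_sqrt; auto. fold lam; lra. }
  rewrite Hsq in E2.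
  assert (HM : isQt (tpow P Q T (k + k))) by (apply isQt_pow; auto; apply isQ_IZR).
  assert (HeM : evR theta (tpow P Q T (k + k)) = lam ^ (k + k)) by (apply evR_pow; unfold P, Q in *; lra).
  destruct (tpow P Q T (k + k)) as [A B C]. destruct HM as [HA [HB HC]]; simpl in HA, HB, HC.
  unfold evR in HeM; simpl in HeM.
  unfold t2, theta2, evC, Cmul, Cadd, RtoC in E2. cbn [fst snd tA tB tC] in E2.
  injection E2 as Ere Eim.
  set (s := sqrt (3 * (theta * (theta * 1)) - 4 * IZR p)) in *.
  assert (Hs : 0 < s) by (apply s_pos; auto).
  assert (Hlk : 1 < lam ^ k) by (apply Rlt_pow_R1; auto).
  assert (Hlkk : 1 < lam ^ (k + k)) by (apply Rlt_pow_R1; auto; lia).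
  assert (Eim' : lam ^ k * (s / 2) * (B - C * theta) = 0) by lra.
  apply Rmult_integral in Eim'. destruct Eim' as [Eim'|Eim'].
  { apply Rmult_integral in Eim'. destruct Eim'; lra. }
  destruct (linind p q theta Hnr Hroot B (- C) 0) as [E1 [E3 _]]; auto.
  apply isQ_opp; auto. apply (isQ_IZR 0). lra.
  assert (HC0 : C = 0) by lra. subst B C.
  assert (HA' : A = lam ^ (k + k)) by (rewrite <- HeM; ring).
  assert (Ere' : lam ^ k * A = 1) by (rewrite <- Ere; ring).
  rewrite HA' in Ere'. nra.
Qed.
End Main2.


Lemma angle z : n2 z = 1 -> exists t, z = (cos t, sin t).
Proof.
  destruct z as [x y]. unfold n2; simpl. intro H.
  assert (Hx : -1 <= x <= 1) by nra.
  assert (Hs : sqrt (1 - x²) = Rabs y).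
  { rewrite <- sqrt_Rsqr_abs. f_equal. unfold Rsqr. lra. }
  destruct (Rle_or_lt 0 y) as [Hy|Hy].
  - exists (acos x). rewrite cos_acos, sin_acos, Hs, Rabs_pos_eq; auto.
  - exists (- acos x). rewrite cos_neg, sin_neg, cos_acos, sin_acos, Hs, Rabs_left; auto. f_equal. ring.
Qed.

Lemma pow_angle a n : Cpow (cos a, sin a) n = (cos (INR n * a), sin (INR n * a)).
Proof.
  induction n.
  - simpl. rewrite Rmult_0_l, cos_0, sin_0. reflexivity.
  - simpl Cpow. rewrite IHn. rewrite S_INR.
    replace ((INR n + 1) * a) with (a + INR n * a) by ring.
    rewrite cos_plus, sin_plus. unfold Cmul; simpl. f_equal; ring.
Qed.

Lemma sin_sq_le x : sin x * sin x <= x * x.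
Proof.
  assert (K : forall y, 0 < y -> sin y * sin y <= y * y).
  { intros y Hy. destruct (Rle_or_lt 1 y) as [H1|H1].
    - pose proof (SIN_bound y). nra.
    - assert (0 <= sin y) by (apply sin_ge_0; pose proof PI_RGT_0; pose proof PI2_1; lra).
      pose proof (sin_lt_x y Hy). nra. }
  destruct (Rtotal_order x 0) as [H|[H|H]].
  - replace (sin x * sin x) with (sin (- x) * sin (- x)) by (rewrite sin_neg; ring).
    replace (x * x) with ((- x) * (- x)) by ring. apply K. lra.
  - subst. rewrite sin_0. lra.
  - auto.
Qed.

Lemma chord a b : Cnorm (Csub (cos a, sin a) (cos b, sin b)) <= Rabs (a - b).
Proof.
  unfold Cnorm, Csub; simpl.
  rewrite <- sqrt_Rsqr_abs. apply sqrt_le_1_alt.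
  assert (E : (cos a - cos b) * (cos a - cos b) + (sin a - sin b) * (sin a - sin b)
            = 2 - 2 * cos (a - b)).
  { rewrite cos_minus. pose proof (sin2_cos2 a). pose proof (sin2_cos2 b). unfold Rsqr in *. nra. }
  rewrite E. replace (a - b) with (2 * ((a - b) / 2)) at 1 by field.
  rewrite cos_2a_sin. pose proof (sin_sq_le ((a - b) / 2)). unfold Rsqr. nra.
Qed.

Lemma cos_periodZ x j : cos (x + 2 * IZR j * PI) = cos x.
Proof.
  destruct (Z_le_gt_dec 0 j) as [H|H].
  - rewrite <- (Z2Nat.id j H), <- INR_IZR_INZ. apply cos_period.
  - replace j with (- Z.of_nat (Z.to_nat (- j)))%Z by lia.
    rewrite opp_IZR, <- INR_IZR_INZ.
    rewrite <- (cos_period (x + 2 * - INR (Z.to_nat (- j)) * PI) (Z.to_nat (- j))).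
    f_equal. ring.
Qed.

Lemma sin_periodZ x j : sin (x + 2 * IZR j * PI) = sin x.
Proof.
  destruct (Z_le_gt_dec 0 j) as [H|H].
  - rewrite <- (Z2Nat.id j H), <- INR_IZR_INZ. apply sin_period.
  - replace j with (- Z.of_nat (Z.to_nat (- j)))%Z by lia.
    rewrite opp_IZR, <- INR_IZR_INZ.
    rewrite <- (sin_period (x + 2 * - INR (Z.to_nat (- j)) * PI) (Z.to_nat (- j))).
    f_equal. ring.
Qed.


Lemma pigeon N (g : nat -> nat) : (forall i, (i <= N)%nat -> (g i < N)%nat) ->
  exists i i', (i < i' <= N)%nat /\ g i = g i'.
Proof.
  revert g. induction N as [|N IH]; intros g Hg.
  - specialize (Hg 0%nat (le_n 0)). lia.
  - destruct (classic (exists i, (i <= N)%nat /\ g i = g (S N))) as [[i [Hi E]]|Hno].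
    + exists i, (S N). split; [lia|auto].
    + set (h := fun i => if Nat.eqb (g i) N then g (S N) else g i).
      destruct (IH h) as [i [i' [Hii E]]].
      * intros i Hi. unfold h. destruct (Nat.eqb_spec (g i) N) as [Ei|Ei].
        -- assert (g (S N) <> N). { intro C. apply Hno. exists i. split; auto. lia. }
           specialize (Hg (S N) (le_n _)). lia.
        -- specialize (Hg i ltac:(lia)). lia.
      * unfold h in E.
        destruct (Nat.eqb_spec (g i) N) as [Ei|Ei]; destruct (Nat.eqb_spec (g i') N) as [Ei'|Ei'].
        -- exists i, i'. split; [lia|congruence].
        -- exfalso. apply Hno. exists i'. split; [lia|auto].
        -- exfalso. apply Hno. exists i. split; [lia|auto].
        -- exists i, i'. split; [lia|auto].
Qed.

Lemma Int_part_nonneg r : 0 <= r -> (0 <= Int_part r)%Z.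
Proof.
  intro H. destruct (base_Int_part r) as [H1 H2].
  assert (IZR (Int_part r) > -1) by lra.
  apply lt_IZR in H0. lia.
Qed.

Lemma approx e y : 0 < e -> 0 <= y -> exists k : nat, INR k * e <= y < INR k * e + e.
Proof.
  intros He Hy.
  assert (Hye : 0 <= y / e) by (apply Rmult_le_pos; auto; left; apply Rinv_0_lt_compat; auto).
  exists (Z.to_nat (Int_part (y / e))).
  rewrite INR_IZR_INZ, Z2Nat.id by (apply Int_part_nonneg; auto).
  destruct (base_Int_part (y / e)) as [H1 H2].
  set (z := IZR (Int_part (y / e))) in *.
  split.
  - apply (Rmult_le_reg_r (/ e)). apply Rinv_0_lt_compat; auto.
    replace (z * e * / e) with z by (field; lra). exact H1.
  - apply (Rmult_lt_reg_r (/ e)). apply Rinv_0_lt_compat; auto.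
    replace ((z * e + e) * / e) with (z + 1) by (field; lra). unfold Rdiv in H2. lra.
Qed.

Lemma small_mult g : (forall m : nat, (0 < m)%nat -> forall j : Z, INR m * g <> IZR j) ->
  forall d, 0 < d -> exists (m : nat) (j : Z), 0 < Rabs (INR m * g - IZR j) < d.
Proof.
  intros Hg d Hd.
  destruct (archimed_cor1 d Hd) as [N [HN HN0]].
  assert (HNr : 0 < INR N) by (apply lt_0_INR; auto).
  set (f := fun i : nat => INR i * g - IZR (Int_part (INR i * g))).
  assert (Hf : forall i, 0 <= f i < 1).
  { intro i. unfold f. destruct (base_Int_part (INR i * g)). lra. }
  set (h := fun i => Z.to_nat (Int_part (INR N * f i))).
  assert (Hnn : forall i, (0 <= Int_part (INR N * f i))%Z).
  { intro i. apply Int_part_nonneg. specialize (Hf i). nra. }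
  destruct (pigeon N h) as [i [i' [Hii E]]].
  { intros i _. unfold h. specialize (Hf i). specialize (Hnn i).
    destruct (base_Int_part (INR N * f i)) as [H1 _].
    assert (INR N * f i < INR N * 1) by (apply Rmult_lt_compat_l; lra).
    assert (HH : IZR (Int_part (INR N * f i)) < INR N) by lra.
    assert (HH2 : (Int_part (INR N * f i) < Z.of_nat N)%Z) by (apply lt_IZR; rewrite <- INR_IZR_INZ; exact HH). lia. }
  unfold h in E. apply Z2Nat.inj in E; auto.
  destruct (base_Int_part (INR N * f i)) as [A1 A2].
  destruct (base_Int_part (INR N * f i')) as [B1 B2].
  rewrite E in A1, A2.
  assert (Hdiff : Rabs (f i' - f i) < / INR N).
  { apply Rabs_def1.
    - apply (Rmult_lt_reg_l (INR N)); auto. rewrite Rinv_r by lra. lra.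
    - apply (Rmult_lt_reg_l (INR N)); auto. replace (INR N * - / INR N) with (-1) by (field; lra). lra. }
  exists (i' - i)%nat, (Int_part (INR i' * g) - Int_part (INR i * g))%Z.
  assert (Em : INR (i' - i) * g - IZR (Int_part (INR i' * g) - Int_part (INR i * g)) = f i' - f i).
  { rewrite minus_INR by lia. rewrite minus_IZR. unfold f. ring. }
  rewrite Em. split; [|lra].
  apply Rabs_pos_lt. rewrite <- Em. intro C.
  apply (Hg (i' - i)%nat ltac:(lia) (Int_part (INR i' * g) - Int_part (INR i * g))%Z). lra.
Qed.

Lemma kron g : (forall m : nat, (0 < m)%nat -> forall j : Z, INR m * g <> IZR j) ->
  forall t d, 0 < d -> exists (n : nat) (J : Z), Rabs (INR n * g - t - IZR J) < d.
Proof.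
  intros Hg t d Hd.
  destruct (small_mult g Hg d Hd) as [m [j [He1 He2]]].
  set (e := INR m * g - IZR j) in *.
  set (t0 := t - IZR (Int_part t)).
  assert (Ht0 : 0 <= t0 < 1) by (unfold t0; destruct (base_Int_part t); lra).
  destruct (Rle_or_lt 0 e) as [Hpos|Hneg].
  - rewrite Rabs_pos_eq in He1, He2 by lra.
    destruct (approx e t0 He1 (proj1 Ht0)) as [k Hk].
    exists (k * m)%nat, (Z.of_nat k * j - Int_part t)%Z.
    rewrite mult_INR, minus_IZR, mult_IZR, <- INR_IZR_INZ.
    replace (INR k * INR m * g - t - (INR k * IZR j - IZR (Int_part t))) with (INR k * e - t0)
      by (unfold e, t0; ring).
    apply Rabs_def1; lra.
  - rewrite Rabs_left in He1, He2 by lra.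
    destruct (approx (- e) (1 - t0) He1 ltac:(lra)) as [k Hk].
    exists (k * m)%nat, (Z.of_nat k * j - Int_part t - 1)%Z.
    rewrite mult_INR, !minus_IZR, mult_IZR, <- INR_IZR_INZ.
    replace (INR k * INR m * g - t - (INR k * IZR j - IZR (Int_part t) - 1)) with (- (INR k * - e - (1 - t0)))
      by (unfold e, t0; ring).
    apply Rabs_def1; lra.
Qed.

Lemma density (w : Cpx) : n2 w = 1 -> (forall k : nat, (0 < k)%nat -> Cpow w k <> (1, 0)) ->
  forall z : Cpx, Cnorm z = 1 -> forall eps : R, 0 < eps ->
  exists n : nat, Cnorm (Csub (Cpow w n) z) < eps.
Proof.
  intros Hw Hnr z Hz eps Heps.
  assert (Hz2 : n2 z = 1).
  { unfold Cnorm in Hz. fold (n2 z) in Hz.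
    assert (0 <= n2 z) by (unfold n2; nra).
    rewrite <- (sqrt_sqrt (n2 z)) by auto. rewrite Hz. ring. }
  destruct (angle w Hw) as [a Ha].
  destruct (angle z Hz2) as [b Hb].
  assert (HPI := PI_RGT_0).
  set (g := a / (2 * PI)).
  assert (Hg : forall m : nat, (0 < m)%nat -> forall j : Z, INR m * g <> IZR j).
  { intros m Hm j C. apply (Hnr m Hm). rewrite Ha, pow_angle.
    replace (INR m * a) with (0 + 2 * IZR j * PI).
    - rewrite cos_periodZ, sin_periodZ, cos_0, sin_0. reflexivity.
    - rewrite <- C. unfold g. field. lra. }
  destruct (kron g Hg (b / (2 * PI)) (eps / (2 * PI))) as [n [J HJ]].
  { apply Rmult_lt_0_compat; auto. apply Rinv_0_lt_compat. lra. }
  exists n. rewrite Ha, pow_angle, Hb.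
  rewrite <- (cos_periodZ b J), <- (sin_periodZ b J).
  eapply Rle_lt_trans. apply chord.
  replace (INR n * a - (b + 2 * IZR J * PI)) with ((2 * PI) * (INR n * g - b / (2 * PI) - IZR J))
    by (unfold g; field; lra).
  rewrite Rabs_mult, Rabs_pos_eq by lra.
  apply (Rmult_lt_reg_l (/ (2 * PI))). apply Rinv_0_lt_compat; lra.
  rewrite <- Rmult_assoc, Rinv_l, Rmult_1_l by lra.
  replace (/ (2 * PI) * eps) with (eps / (2 * PI)) by (field; lra). exact HJ.
Qed.


Theorem mainTheorem13 (p q : Z) (theta : R)
  (Hirr : cubic_irreducible_Q p q)
  (Hroot : theta ^ 3 - IZR p * theta - IZR q = 0)
  (Huniq : forall x : R, x ^ 3 - IZR p * x - IZR q = 0 -> x = theta)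
  (lambda : R) (a b c : Q)
  (HK : lambda = Q2R a + Q2R b * theta + Q2R c * theta ^ 2)
  (Hint : is_alg_int lambda)
  (Hunit : is_alg_int (/ lambda))
  (Hgt1 : 1 < lambda) :
  let w := Cmul (RtoC (sqrt lambda)) (sigma2 p theta a b c) in
  Cnorm w = 1 /\
  (forall k : nat, (0 < k)%nat -> Cpow w k <> (1, 0)) /\
  (forall n : nat, Cnorm (Cpow w n) = 1) /\
  (forall z : Cpx, Cnorm z = 1 ->
     forall eps : R, 0 < eps ->
       exists n : nat, Cnorm (Csub (Cpow w n) z) < eps).
Proof.
  intro w.
  assert (Hnr := noQroot p q Hirr).
  assert (Hpos := Hpos_lem p q theta Hnr Hroot Huniq).
  set (T := mkT (Q2R a) (Q2R b) (Q2R c)).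
  assert (HT : isQt T) by (repeat split; apply isQ_Q2R).
  assert (HlT : lambda = evR theta T) by (rewrite HK; reflexivity).
  assert (Hs : sigma2 p theta a b c = evC (theta2 p theta) T) by reflexivity.
  unfold w in *. rewrite Hs. clear w Hs. rewrite HlT in Hint, Hunit, Hgt1 |- *.
  assert (NO := norm_one p q theta Hnr Hroot Hpos T HT Hgt1 Hint Hunit).
  set (w := Cmul (RtoC (sqrt (evR theta T))) (evC (theta2 p theta) T)).
  assert (Hw : n2 w = 1).
  { unfold w. rewrite n2_mul. unfold n2 at 1, RtoC; simpl.
    rewrite Rmult_0_l, Rplus_0_r, sqrt_sqrt by lra. exact NO. }
  assert (Hn : forall n, Cnorm (Cpow w n) = 1).
  { intro n. unfold Cnorm. fold (n2 (Cpow w n)). rewrite n2_pow, Hw, pow1. apply sqrt_1. }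
  split; [|split; [|split]].
  - unfold Cnorm. fold (n2 w). rewrite Hw. apply sqrt_1.
  - intros k Hk. apply (not_root p q theta Hnr Hroot Hpos T HT Hgt1 k Hk).
  - exact Hn.
  - apply density; auto. apply (not_root p q theta Hnr Hroot Hpos T HT Hgt1).
Qed.
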